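(* Let $\Gamma$ be a finite connected trivalent ribbon graph with set of oriented edges $E$, let $z:E\to\mathbb{R}$ satisfy $z(\rho_1\gamma)=z(\gamma)$ for all $\gamma\in E$, and fix $\epsilon\in E$. Then the image $\Delta(\Gamma,z,\epsilon):=CHF(B(E,\epsilon))\subset PSL_2(\mathbb{R})$ is a Fuchsian group (a discrete subgroup of $PSL_2(\mathbb{R})$).
   Context: A trivalent ribbon graph is a graph all of whose vertices have valency $3$, together with a cyclic order on the edge-ends at each vertex. $E$ denotes the set of oriented edges of $\Gamma$. The group $C_2^+[3]=\langle \rho_0,\rho_1 \mid \rho_1^2=\rho_0^3=1\rangle$ acts on $E$: $\rho_0$ sends an oriented edge to the next oriented edge (in the cyclic order, counterclockwise) with the same origin, and $\rho_1$ reverses the orientation of the edge. For $\epsilon\in E$, $B(E,\epsilon)=\{w\in C_2^+[3] : w\epsilon=\epsilon\}$ is its stabilizer. For $a\in\mathbb{R}$ put $X_a=\begin{pmatrix}0&-e^{a/2}\\ e^{-a/2}&0\end{pmatrix}$ and $L=\begin{pmatrix}0&1\\-1&-1\end{pmatrix}$, regarded in $PSL_2(\mathbb{R})$. The map $CHF: C_2^+[3]\to PSL_2(\mathbb{R})$ (depending on $\Gamma,z,\epsilon$) is defined inductively on words by $CHF(1)=1$, $CHF(\rho_0 w)=L\cdot CHF(w)$, $CHF(\rho_1 w)=X_{z(w\epsilon)}\cdot CHF(w)$; it is well defined on the group since $L^3=1$ and $X_aX_a=1$ in $PSL_2(\mathbb{R})$. Its restriction to $B(E,\epsilon)$ is a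 homomorphism, so $\Delta(\Gamma,z,\epsilon)$ is a subgroup of $PSL_2(\mathbb{R})$. *)

(* Defs.v *)
From HB Require Import structures.
From mathcomp Require Import all_boot all_order all_algebra perm.
From mathcomp Require Import reals.
From mathcomp Require Import sequences exp.
Set Implicit Arguments. Unset Strict Implicit. Unset Printing Implicit Defensive.
Import Order.TTheory GRing.Theory Num.Theory.
Local Open Scope ring_scope.

(* Generators of C_2^+[3] = < rho0, rho1 | rho1^2 = rho0^3 = 1 >.
   Elements of the group are represented by words in the generators. *)
Inductive gen := g_rho0 | g_rho1.
Definition word := seq gen.

Section Ribbon.
Variables (E : finType) (rho0 rho1 : {perm E}).

(* action of a word; the head letter acts last: (rho w) e = rho (w e) *)
Fixpoint wact (w : word) (e : E) : E :=
  match w with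
  | [::] => e
  | g_rho0 :: w' => rho0 (wact w' e)
  | g_rho1 :: w' => rho1 (wact w' e)
  end.

(* (E, rho0, rho1) is the set of oriented edges of a trivalent ribbon graph:
   rho0 has all orbits of size exactly 3 (vertices of valency 3 with their
   cyclic orders), rho1 is a fixed-point-free involution (edge reversal). *)
Definition trivalent_ribbon : Prop :=
  (forall e, rho0 (rho0 (rho0 e)) = e) /\ (forall e, rho0 e != e) /\
  (forall e, rho1 (rho1 e) = e) /\ (forall e, rho1 e != e).

Definition ribbon_connected : Prop :=
  forall e f : E, exists w : word, wact w e = f.

Variable R : realType.

Definition Xmx (a : R) : 'M[R]_2 :=
  \matrix_(i < 2, j < 2)
    if (i == 0 :> nat) then (if (j == 0 :> nat) then 0 else - expR (a / 2))
    else (if (j == 0 :> nat) then expR (- (a / 2)) else 0).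

Definition Lmx : 'M[R]_2 :=
  \matrix_(i < 2, j < 2)
    if (i == 0 :> nat) then (if (j == 0 :> nat) then 0 else 1)
    else (if (j == 0 :> nat) then -1 else -1).

Variables (z : E -> R) (eps : E).

(* CHF on words, as SL_2(R) representatives of elements of PSL_2(R) *)
Fixpoint CHF (w : word) : 'M[R]_2 :=
  match w with
  | [::] => 1%:M
  | g_rho0 :: w' => Lmx *m CHF w'
  | g_rho1 :: w' => Xmx (z (wact w' eps)) *m CHF w'
  end.

(* Preimage in SL_2(R) of Delta(Gamma,z,eps) = CHF(B(E,eps)) in PSL_2(R) *)
Definition Delta_lift (M : 'M[R]_2) : Prop :=
  exists w : word, wact w eps = eps /\ (M = CHF w \/ M = - CHF w).

End Ribbon.

(* A set S of 2x2 real matrices, closed under M |-> -M, representing its image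
   in PSL_2(R) = SL_2(R)/{+-1}, is a Fuchsian group: it is contained in SL_2(R),
   its image is a subgroup of PSL_2(R), and it is discrete (equivalently, since
   SL_2(R) -> PSL_2(R) is a 2-sheeted covering, the preimage S is discrete in
   SL_2(R), with the topology given by the entries). *)
Definition fuchsian_lift (R : realType) (S : 'M[R]_2 -> Prop) : Prop :=
  (forall M, S M -> \det M = 1) /\
  (forall M, S M -> S (- M)) /\
  S 1%:M /\
  (forall M N, S M -> S N -> S (M *m N)) /\
  (forall M, S M -> S (invmx M)) /\
  (forall M, S M -> exists2 d : R, 0 < d &
     forall N, S N -> (forall i j, `|N i j - M i j| < d) -> N = M).

(* Main.v *)
Require Import Defs.
From HB Require Import structures.
From mathcomp Require Import all_boot all_order all_algebra perm.
From mathcomp Require Import reals.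
From mathcomp Require Import sequences exp.
From mathcomp Require Import ring lra.
Set Implicit Arguments. Unset Strict Implicit. Unset Printing Implicit Defensive.
Import Order.TTheory GRing.Theory Num.Theory.
Local Open Scope ring_scope.

Section M2.
Variable R : realType.

Definition mk (a b c d : R) : 'M[R]_2 :=
  \matrix_(i < 2, j < 2)
    if (i == 0 :> nat) then (if (j == 0 :> nat) then a else b)
    else (if (j == 0 :> nat) then c else d).

Lemma ord2P (P : 'I_2 -> Prop) : P 0 -> P 1 -> forall i, P i.
Proof.
move=> P0 P1 [[|[|//]]] Hi.
  by rewrite (_ : Ordinal Hi = 0) //; apply/val_inj.
by rewrite (_ : Ordinal Hi = 1) //; apply/val_inj.
Qed.

Lemma mkE (M : 'M[R]_2) : M = mk (M 0 0) (M 0 1) (M 1 0) (M 1 1).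
Proof.
apply/matrixP; elim/ord2P => j; elim/ord2P: j; by rewrite !mxE.
Qed.

Lemma mk_mul a b c d a' b' c' d' :
  mk a b c d *m mk a' b' c' d' = mk (a*a' + b*c') (a*b' + b*d') (c*a'+d*c') (c*b'+d*d').
Proof.
apply/matrixP; elim/ord2P => j; elim/ord2P: j;
  by rewrite !mxE !big_ord_recl big_ord0 !mxE /= addr0.
Qed.

Lemma mk_opp a b c d : - mk a b c d = mk (-a) (-b) (-c) (-d).
Proof. apply/matrixP; elim/ord2P => j; elim/ord2P: j; by rewrite !mxE. Qed.

Lemma mk1 : 1%:M = mk 1 0 0 1 :> 'M[R]_2.
Proof. apply/matrixP; elim/ord2P => j; elim/ord2P: j; by rewrite !mxE. Qed.

Lemma mkL : Lmx R = mk 0 1 (-1) (-1).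
Proof. apply/matrixP; elim/ord2P => j; elim/ord2P: j; by rewrite !mxE. Qed.

Lemma mkX a : Xmx a = mk 0 (- expR (a/2)) (expR (-(a/2))) 0.
Proof. apply/matrixP; elim/ord2P => j; elim/ord2P: j; by rewrite !mxE. Qed.

Lemma mk_entries a b c d :
  [/\ mk a b c d 0 0 = a, mk a b c d 0 1 = b, mk a b c d 1 0 = c & mk a b c d 1 1 = d].
Proof. by rewrite !mxE. Qed.

Lemma det_mk a b c d : \det (mk a b c d) = a * d - b * c.
Proof.
rewrite (expand_det_row _ 0) !big_ord_recl big_ord0 /cofactor !mxE /=.
rewrite !det_mx11 !mxE /= expr0 expr1 addr0 mul1r mulN1r mulrN.
done.
Qed.

Definition pm (A B : 'M[R]_2) := A = B \/ A = - B.

Lemma pm_refl A : pm A A. Proof. by left. Qed.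
Lemma pm_sym A B : pm A B -> pm B A.
Proof. by case=> ->; [left|right; rewrite opprK]. Qed.
Lemma pm_trans A B D : pm A B -> pm B D -> pm A D.
Proof. by case=> ->; case=> ->; rewrite ?opprK; [left|right|right|left]. Qed.
Lemma pm_mull (K A B : 'M[R]_2) : pm A B -> pm (K *m A) (K *m B).
Proof. by case=> ->; [left|right; rewrite mulmxN]. Qed.
Lemma pm_mulr (K A B : 'M[R]_2) : pm A B -> pm (A *m K) (B *m K).
Proof. by case=> ->; [left|right; rewrite mulNmx]. Qed.
Lemma pm_opp A B : pm A B -> pm A (- B).
Proof. by case=> ->; [right; rewrite opprK|left]. Qed.

End M2.

Section Far.
Variable R : realType.

Definition Lp (f : nat) : 'M[R]_2 := iter f (mulmx (Lmx R)) 1%:M.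

Definition Shape (f : nat) (M : 'M[R]_2) : Prop :=
  exists p q r t (T : 'M[R]_2),
  [/\ 0 <= p, 0 <= q, 0 <= r, 0 <= t & (f < 3)%N] /\
  (T = 1%:M \/ exists a, T = Xmx a) /\
  ((p <= q /\ r <= t) \/ (q <= p /\ t <= r) \/
   (p = 1 /\ q = 0 /\ r = 0 /\ t = 1 /\ ((0 < f)%N \/ exists a, T = Xmx a))) /\
  pm M (Lp f *m mk p q r t *m T).

Definition near (M : 'M[R]_2) := forall i j, `|M i j - (1%:M : 'M[R]_2) i j| < 1/2.

Lemma near_mk a b c d : near (mk a b c d) ->
  [/\ -1/2 < a - 1 < 1/2, -1/2 < b < 1/2, -1/2 < c < 1/2 & -1/2 < d - 1 < 1/2].
Proof.
move=> H; have := H 0 0; have := H 0 1; have := H 1 0; have := H 1 1.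
rewrite !mxE /= !ltr_norml ?subr0 -!mulNr.
by move=> -> -> -> ->.
Qed.

Lemma far_aux f p q r t (T : 'M[R]_2) :
  0 <= p -> 0 <= q -> 0 <= r -> 0 <= t -> (f < 3)%N ->
  (T = 1%:M \/ exists a, T = Xmx a) ->
  ((p <= q /\ r <= t) \/ (q <= p /\ t <= r) \/
   (p = 1 /\ q = 0 /\ r = 0 /\ t = 1 /\ ((0 < f)%N \/ exists a, T = Xmx a))) ->
  ~ near (Lp f *m mk p q r t *m T) /\ ~ near (- (Lp f *m mk p q r t *m T)).
Proof.
move=> hp hq hr ht hf hT hc.
case: hT => [hT|[a hT]]; subst T.
- rewrite mulmx1.
  case: f hf hc => [|[|[|//]]] _ hc; rewrite /Lp /= ?mulmx1 ?mul1mx ?mkL ?mk_mul ?mk_opp;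
  split => /near_mk [/andP[h1 h2] /andP[h3 h4] /andP[h5 h6] /andP[h7 h8]];
  case: hc => [[h9 h10]|[[h9 h10]|[e1 [e2 [e3 [e4 [hf0|[b hb]]]]]]]]; try done; try nra;
  try by have := congr1 (fun M : 'M[R]_2 => M 0 0) hb; rewrite !mxE /=; lra.
- rewrite mkX.
  have hs := expR_gt0 (a/2); have hs' := expR_gt0 (-(a/2)).
  move: (expR (a/2)) (expR (-(a/2))) hs hs' => s s' hs hs'.
  case: f hf hc => [|[|[|//]]] _ hc; rewrite /Lp /= ?mulmx1 ?mul1mx ?mkL ?mk_mul ?mk_opp;
  split => /near_mk [/andP[h1 h2] /andP[h3 h4] /andP[h5 h6] /andP[h7 h8]]; try nra.
Qed.

End Far.

Section Shp.
Variable R : realType.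

Lemma shape_L f (M : 'M[R]_2) : Shape f M -> (f < 2)%N -> Shape f.+1 (Lmx R *m M).
Proof.
move=> [p [q [r [t [T [[hp hq hr ht _] [hT [hc hM]]]]]]]] hf.
exists p, q, r, t, T; split; first by split.
split => //; split.
  case: hc => [h|[h|[e1 [e2 [e3 [e4 _]]]]]]; [left|right;left|right;right] => //.
  by do 4 split => //; left.
by rewrite /Lp iterS -/(Lp R f) -!mulmxA; apply: pm_mull; rewrite !mulmxA.
Qed.

Lemma pm_congr (A B B' : 'M[R]_2) : pm A B -> B = B' -> pm A B'.
Proof. by move=> ? <-. Qed.

Lemma shape_X a f (M : 'M[R]_2) : Shape f M -> (0 < f)%N -> Shape 0 (Xmx a *m M).
Proof.
move=> [p [q [r [t [T [[hp hq hr ht hf3] [hT [hc hM]]]]]]]] hf.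
have hs := expR_gt0 (a/2); have hs' := expR_gt0 (-(a/2)).
have: pm (Xmx a *m M) ((Xmx a *m Lp R f) *m mk p q r t *m T).
  by rewrite -!mulmxA; apply: pm_mull; rewrite !mulmxA.
rewrite mkX.
move: (expR (a/2)) (expR (-(a/2))) hs hs' => s s' hs hs' H.
case: f hf hf3 hM H hc => [|[|[|//]]] // _ _ hM; rewrite /Lp /= mulmx1 mkL ?mk_mul => H.
- exists (s * p + s * r), (s * q + s * t), (s' * r), (s' * t), T.
  split; first by split => //; nra.
  split => //; split.
    case: hc => [[h1 h2]|[[h1 h2]|[e1 [e2 [e3 e4]]]]]; [left|right;left|left]; subst; nra.
  move: H; rewrite /Lp /= mul1mx => H; apply: (pm_congr H).
  by congr (_ *m _); congr mk; ring.
- exists (s * p), (s * q), (s' * p + s' * r), (s' * q + s' * t), T.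
  split; first by split => //; nra.
  split => //; split.
    case: hc => [[h1 h2]|[[h1 h2]|[e1 [e2 [e3 e4]]]]]; [left|right;left|right;left]; subst; nra.
  move: H; rewrite /Lp /= mul1mx => H; apply: (pm_trans H); right.
  by rewrite -mulNmx; congr (_ *m _); rewrite mk_opp; congr mk; ring.
Qed.

End Shp.
Section W.
Variables (E : finType) (rho0 rho1 : {perm E}) (R : realType) (z : E -> R).
Hypothesis h03 : forall e, rho0 (rho0 (rho0 e)) = e.
Hypothesis h11 : forall e, rho1 (rho1 e) = e.
Hypothesis hz : forall g, z (rho1 g) = z g.

Local Notation act := (wact rho0 rho1).
Local Notation C := (CHF rho0 rho1 z).

Lemma wact_cat u v e : act (u ++ v) e = act u (act v e).
Proof. by elim: u => [|[] u IH] //=; rewrite IH. Qed.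

Lemma CHF_cat u v e : C e (u ++ v) = C (act v e) u *m C e v.
Proof.
elim: u => [|[] u IH] /=; first by rewrite mul1mx.
  by rewrite IH mulmxA.
by rewrite IH wact_cat mulmxA.
Qed.

Lemma XX a : Xmx a *m Xmx a = - 1%:M :> 'M[R]_2.
Proof.
rewrite mkX mk_mul mk1 mk_opp; congr mk; rewrite ?mulr0 ?mul0r ?addr0 ?add0r ?oppr0 //.
  by rewrite mulNr -expRD addrN expR0.
by rewrite mulrN -expRD addNr expR0.
Qed.

Lemma LLL : Lmx R *m (Lmx R *m Lmx R) = 1%:M.
Proof. rewrite mkL !mk_mul mk1; congr mk; ring. Qed.

Definition push (g : gen) (r : word) : word :=
  match g, r with
  | g_rho1, g_rho1 :: r' => r'
  | g_rho0, g_rho0 :: g_rho0 :: r' => r'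
  | _, _ => g :: r
  end.

Fixpoint red (w : word) : word :=
  if w is g :: w' then push g (red w') else [::].

Lemma push_spec g r e : act (push g r) e = act (g :: r) e /\ pm (C e (push g r)) (C e (g :: r)).
Proof.
case: g; case: r => [|[] r] /=; try by split => //; left.
- case: r => [|[] r] /=; try by split => //; left.
  split; first by rewrite h03.
  rewrite !mulmxA -(mulmxA (Lmx R)) LLL mul1mx; left => //.
- split; first by rewrite h11.
  rewrite mulmxA hz XX mulNmx mul1mx; right; by rewrite opprK.
Qed.

Lemma red_spec w e : act (red w) e = act w e /\ pm (C e (red w)) (C e w).
Proof.
elim: w => [|g w [IH1 IH2]] /=; first by split => //; left.
have [P1 P2] := push_spec g (red w) e.
split; first by rewrite P1; case: {P1 P2} g => /=; rewrite IH1.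
apply: (pm_trans P2); case: {P1 P2} g => /=; rewrite ?IH1; exact: pm_mull.
Qed.

Fixpoint reduced (r : word) : bool :=
  match r with
  | g_rho1 :: g_rho1 :: _ => false
  | g_rho0 :: g_rho0 :: g_rho0 :: _ => false
  | _ :: r' => reduced r'
  | [::] => true
  end.

Lemma reduced_push g r : reduced r -> reduced (push g r).
Proof. by case: g; case: r => [|[] [|[] [|[] r]]]. Qed.

Lemma reduced_red w : reduced (red w).
Proof. elim: w => [|g w IH] //=; exact: reduced_push. Qed.

Definition lead0 (r : word) : nat :=
  match r with
  | g_rho0 :: g_rho0 :: _ => 2
  | g_rho0 :: _ => 1
  | _ => 0
  end.

Lemma shape_red r e : reduced r -> r = [::] \/ Shape (lead0 r) (C e r).
Proof.
elim: r => [|g r IH] //=; first by left.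
move=> Hr; right.
have Hr' : reduced r by move: Hr; case: g; case: r {IH} => [|[] [|[] r]].
case: r IH Hr Hr' => [|g' r] IH Hr Hr'.
- case: g Hr => _ /=.
  + exists 1, 0, 0, 1, 1%:M; split; first by split.
    split; first by left. split; first by right; right; do 4 split => //; left.
    by left; rewrite /Lp /= -mk1 !mulmx1.
  + exists 1, 0, 0, 1, (Xmx (z e)); split; first by split.
    split; first by right; exists (z e). split; first by right; right; do 4 split => //; right; exists (z e).
    by left; rewrite /Lp /= -mk1 mulmx1 !mul1mx.
- case: IH => // IH.
  case: g Hr => Hr /=.
  + case: g' IH Hr {Hr'} => IH Hr.
      by case: r IH Hr => [|[] r] IH Hr //; exact: shape_L IH _.
    exact: shape_L IH _.
  + move: Hr; case: g' IH {Hr'} => // IH _.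
    by case: r IH => [|[] r] IH; exact: (shape_X _ IH).
Qed.

Lemma detC w e : \det (C e w) = 1.
Proof.
elim: w => [|[] w IH] /=; first by rewrite det1.
  by rewrite det_mulmx IH mkL det_mk; ring.
by rewrite det_mulmx IH mkX det_mk mul0r sub0r mulr1 mulNr opprK -expRD addrN expR0.
Qed.

Lemma detpm w e (M : 'M[R]_2) : pm M (C e w) -> \det M = 1.
Proof.
by case=> ->; rewrite ?detC // -scaleN1r detZ detC expr2 mulr1 mulrNN mulr1.
Qed.

Fixpoint winv (w : word) : word :=
  match w with
  | [::] => [::]
  | g :: w' => winv w' ++ (if g is g_rho0 then [:: g_rho0; g_rho0] else [:: g_rho1])
  end.

Lemma winv_spec w e : act (winv w) (act w e) = e /\ pm (C (act w e) (winv w) *m C e w) 1%:M.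
Proof.
elim: w => [|[] w [IH1 IH2]] /=; first by split => //; left; rewrite mul1mx.
- rewrite wact_cat CHF_cat /= h03 IH1; split => //.
  rewrite mulmx1 -!mulmxA (mulmxA (Lmx R)) (mulmxA (Lmx R *m Lmx R)) -(mulmxA (Lmx R)) LLL mul1mx.
  by [].
- rewrite wact_cat CHF_cat /= h11 IH1; split => //.
  rewrite mulmx1 hz -!mulmxA (mulmxA (Xmx _)) XX mulNmx mul1mx mulmxN.
  by case: IH2 => ->; [right|left; rewrite opprK].
Qed.

End W.

Section Fin.
Variable R : realType.

Lemma mulmx_entry (A B : 'M[R]_2) i j : (A *m B) i j = A i 0 * B 0 j + A i 1 * B 1 j.
Proof. rewrite mxE !big_ord_recl big_ord0 addr0; congr (_ * _ + _ * _); congr (_ _ _); exact/val_inj. Qed.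

Lemma bnd (k0 k1 n0 n1 m0 m1 dl c d : R) : k0 * m0 + k1 * m1 = dl ->
  `|n0 - m0| < d -> `|n1 - m1| < d -> `|k0| + `|k1| + 1 <= c -> c * d = 1/2 -> 0 < d ->
  `|k0 * n0 + k1 * n1 - dl| < 1/2.
Proof.
move=> <- h0 h1 hc hcd hd.
have -> : k0 * n0 + k1 * n1 - (k0 * m0 + k1 * m1) = k0 * (n0-m0) + k1 * (n1-m1) by ring.
apply: (le_lt_trans (ler_normD _ _)); rewrite !normrM.
have a0 := normr_ge0 k0; have a1 := normr_ge0 k1.
have b0 := normr_ge0 (n0 - m0); have b1 := normr_ge0 (n1 - m1).
nra.
Qed.

Lemma pm_inv (A B M : 'M[R]_2) : pm (A *m B) 1%:M -> pm M B -> pm (invmx M) A.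
Proof.
have key : forall K X : 'M[R]_2, K *m X = 1%:M -> invmx X = K.
  move=> K X h; have [_ uX] := mulmx1_unit h.
  by rewrite -[K](mulmxK uX) h mul1mx.
rewrite /pm; case=> h; case=> ->.
- by left; apply: key.
- by right; apply: key; rewrite mulmxN mulNmx opprK.
- by right; apply: key; rewrite mulNmx h opprK.
- by left; apply: key; rewrite mulmxN h opprK.
Qed.

Lemma far_shape f (M X : 'M[R]_2) : Shape f M -> pm X M -> ~ near X.
Proof.
move=> [p [q [r [t [T [[hp hq hr ht hf] [hT [hc hM]]]]]]]] hX.
have [n1 n2] := far_aux hp hq hr ht hf hT hc.
by case: (pm_trans hX hM) => ->.
Qed.

Lemma not_near_m1 : ~ near (- 1%:M : 'M[R]_2).
Proof. by move=> /(_ 0 0); rewrite !mxE /= ltr_norml; lra. Qed.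

End Fin.

Theorem mainTheorem2 (E : finType) (rho0 rho1 : {perm E}) (R : realType)
  (z : E -> R) (eps : E) :
  trivalent_ribbon rho0 rho1 ->
  ribbon_connected rho0 rho1 ->
  (forall g : E, z (rho1 g) = z g) ->
  fuchsian_lift (Delta_lift rho0 rho1 z eps).
Proof.
move=> [h03 [_ [h11 _]]] _ hz.
set S := Delta_lift rho0 rho1 z eps.
have Sdet : forall M, S M -> \det M = 1.
  by move=> M [w [_ hM]]; exact: (detpm hM).
have Sinv : forall M, S M -> S (invmx M).
  move=> M [w [hw hM]].
  have [H1 H2] := winv_spec h03 h11 hz w eps.
  rewrite hw in H1 H2.
  by exists (winv w); split => //; apply: pm_inv H2 hM.
have Smul : forall M N, S M -> S N -> S (M *m N).
  move=> M N [u [hu hM]] [v [hv hN]]; exists (u ++ v); split.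
    by rewrite wact_cat hv hu.
  rewrite CHF_cat hv.
  apply: (pm_trans (pm_mulr _ hM)); exact: pm_mull.
have Snear : forall N, S N -> near N -> N = 1%:M.
  move=> N [w [_ hN]] hn.
  have [_ H2] := red_spec h03 h11 hz w eps.
  have hN' := pm_trans hN (pm_sym H2).
  have [Hr|Hs] := shape_red rho0 rho1 z eps (reduced_red w).
    rewrite Hr /= in hN'; case: hN' hn => -> // /not_near_m1 [].
  by case: (far_shape Hs hN' hn).
split; first exact Sdet.
split; first by move=> M [w [hw hM]]; exists w; split => //; case: hM => ->; [right|left; rewrite opprK].
split; first by exists [::]; split => //; left.
split; first exact Smul.
split; first exact Sinv.
move=> M SM.
have uM : M \in unitmx by rewrite unitmxE Sdet // unitr1.
set K := invmx M.
set c := `|K 0 0| + `|K 0 1| + `|K 1 0| + `|K 1 1| + 1.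
have c0 : 0 < c.
  have := normr_ge0 (K 0 0); have := normr_ge0 (K 0 1);
  have := normr_ge0 (K 1 0); have := normr_ge0 (K 1 1); rewrite /c; lra.
exists ((2 * c)^-1); first by rewrite invr_gt0; lra.
move=> N SN Hd.
have KM : K *m M = 1%:M by rewrite mulVmx.
have hn : near (K *m N).
  have cn : c != 0 := lt0r_neq0 c0.
  have hcd : c * (2 * c)^-1 = 1/2 by field.
  have hd : 0 < (2 * c)^-1 by rewrite invr_gt0; lra.
  have a00 := normr_ge0 (K 0 0); have a01 := normr_ge0 (K 0 1).
  have a10 := normr_ge0 (K 1 0); have a11 := normr_ge0 (K 1 1).
  elim/ord2P => [|]; elim/ord2P => [|];
    rewrite mulmx_entry; apply: bnd (Hd _ _) (Hd _ _) _ hcd hd;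
    rewrite ?(congr1 (fun X => X _ _) KM) -?mulmx_entry ?KM //; rewrite /c; lra.
have := Snear _ (Smul _ _ (Sinv _ SM) SN) hn => h.
by rewrite -[N]mul1mx -(mulmxV uM) -mulmxA h mulmx1.
Qed.
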